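(* There is an absolute constant $C$ such that for every $n\geq 1$, every $w\in\{0,1\}^n$, and every nonempty set $\mathcal{B}\subseteq\{0,1\}^n\setminus\{w\}$, there is a first-order sentence over $\tau_{\mathsf{string}}$ with at most $\log_2(n)+\log_2|\mathcal{B}|+C$ quantifiers that is true in $\mathbf{B}_w$ and false in $\mathbf{B}_{w'}$ for every $w'\in\mathcal{B}$.
   Context: Vocabulary $\tau_{\mathsf{string}}=\langle <, S;\ \mathsf{min},\mathsf{max}\rangle$ with $<$ binary, $S$ unary, $\mathsf{min},\mathsf{max}$ constants. A string $w=w_1\cdots w_n\in\{0,1\}^n$ ($n\geq 1$) is encoded by the structure $\mathbf{B}_w$ with universe $\{1,\dots,n\}$, $<$ the usual order, $S=\{i: w_i=1\}$, $\mathsf{min}=1$, $\mathsf{max}=n$. The number of quantifiers is the number of quantifier occurrences. *)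

(* Defs.v *)
From mathcomp Require Import all_boot.
From Stdlib Require Import Reals.
Set Implicit Arguments. Unset Strict Implicit. Unset Printing Implicit Defensive.

Inductive term : Type :=
| TVar : nat -> term
| TMin : term
| TMax : term.

Inductive formula : Type :=
| FLt  : term -> term -> formula
| FEq  : term -> term -> formula
| FS   : term -> formula
| FNot : formula -> formula
| FAnd : formula -> formula -> formula
| FOr  : formula -> formula -> formula
| FEx  : nat -> formula -> formula
| FAll : nat -> formula -> formula.

Fixpoint nquant (f : formula) : nat :=
  match f with
  | FLt _ _ | FEq _ _ | FS _ => 0
  | FNot g => nquant g
  | FAnd g h | FOr g h => nquant g + nquant h
  | FEx _ g | FAll _ g => (nquant g).+1
  end.

Definition term_vars (t : term) : seq nat :=
  match t with TVar v => [:: v] | _ => [::] end.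

Fixpoint free_vars (f : formula) : seq nat :=
  match f with
  | FLt t1 t2 | FEq t1 t2 => term_vars t1 ++ term_vars t2
  | FS t => term_vars t
  | FNot g => free_vars g
  | FAnd g h | FOr g h => free_vars g ++ free_vars h
  | FEx x g | FAll x g => filter (fun y => y != x) (free_vars g)
  end.

Definition sentence (f : formula) : Prop := free_vars f = [::].

(* The structure B_w for w = w_1 ... w_n : universe {1,...,n}, usual order,
   S = {i | w_i = 1}, min = 1, max = n.  The letter w_i is nth false w (i-1). *)
Section Sem.
Variables (n : nat) (w : n.-tuple bool).

Definition eval_term (a : nat -> nat) (t : term) : nat :=
  match t with TVar v => a v | TMin => 1 | TMax => n end.

Definition upd (a : nat -> nat) (x i : nat) : nat -> nat :=
  fun y => if y == x then i else a y.

Fixpoint sat (a : nat -> nat) (f : formula) : Prop :=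
  match f with
  | FLt t1 t2 => eval_term a t1 < eval_term a t2
  | FEq t1 t2 => eval_term a t1 = eval_term a t2
  | FS t => nth false w (eval_term a t).-1 = true
  | FNot g => ~ sat a g
  | FAnd g h => sat a g /\ sat a h
  | FOr g h => sat a g \/ sat a h
  | FEx x g => exists i, 1 <= i <= n /\ sat (upd a x i) g
  | FAll x g => forall i, 1 <= i <= n -> sat (upd a x i) g
  end.

(* truth of a sentence in B_w (assignments are irrelevant for sentences;
   we evaluate under the assignment constantly equal to 1 = min) *)
Definition models (f : formula) : Prop := sat (fun _ => 1) f.
End Sem.

Definition log2R (x : R) : R := (ln x / ln 2)%R.

(* Main.v *)
Require Import Defs.
From mathcomp Require Import all_boot.
From Stdlib Require Import Reals.
From mathcomp Require Import zify.
From Stdlib Require Import Lia Lra Classical.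
Set Implicit Arguments. Unset Strict Implicit. Unset Printing Implicit Defensive.

Definition termP (P : pred nat) (t : term) : bool :=
  match t with TVar v => P v | _ => true end.

Fixpoint allv (P : pred nat) (f : formula) : bool :=
  match f with
  | FLt a b | FEq a b => termP P a && termP P b
  | FS t => termP P t
  | FNot g => allv P g
  | FAnd g h | FOr g h => allv P g && allv P h
  | FEx _ g | FAll _ g => allv P g
  end.

Lemma termP_mono (P Q : pred nat) t : (forall v, P v -> Q v) -> termP P t -> termP Q t.
Proof. by move=> PQ; case: t => //= v /PQ. Qed.

Lemma allv_mono (P Q : pred nat) f : (forall v, P v -> Q v) -> allv P f -> allv Q f.
Proof.
move=> PQ; elim: f => //=.
- by move=> a b /andP[/(termP_mono PQ) -> /(termP_mono PQ) ->].
- by move=> a b /andP[/(termP_mono PQ) -> /(termP_mono PQ) ->].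
- by move=> a /(termP_mono PQ).
- by move=> g h1 h h2 /andP[/h1 -> /h2 ->].
- by move=> g h1 h h2 /andP[/h1 -> /h2 ->].
Qed.

Section Coinc.
Variables (n : nat) (z : n.-tuple bool).

Lemma eval_agree (P : pred nat) a b t : (forall v, P v -> a v = b v) -> termP P t ->
  eval_term n a t = eval_term n b t.
Proof. by move=> H; case: t => //= v /H. Qed.

Lemma sat_agree (P : pred nat) f : forall a b, (forall v, P v -> a v = b v) -> allv P f ->
  (sat z a f <-> sat z b f).
Proof.
elim: f => /=.
- by move=> t1 t2 a b H /andP[h1 h2]; rewrite (eval_agree H h1) (eval_agree H h2).
- by move=> t1 t2 a b H /andP[h1 h2]; rewrite (eval_agree H h1) (eval_agree H h2).
- by move=> t a b H h1; rewrite (eval_agree H h1).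
- by move=> g IH a b H h; rewrite (IH a b H h).
- by move=> g IHg h IHh a b H /andP[h1 h2]; rewrite (IHg a b H h1) (IHh a b H h2).
- by move=> g IHg h IHh a b H /andP[h1 h2]; rewrite (IHg a b H h1) (IHh a b H h2).
- move=> x g IH a b H h.
  have U : forall i v, P v -> upd a x i v = upd b x i v.
    by move=> i v Pv; rewrite /upd; case: eqP => // _; exact: H.
  by split=> -[i [hi s]]; exists i; split=> //; move: s; rewrite (IH _ _ (U i) h).
- move=> x g IH a b H h.
  have U : forall i v, P v -> upd a x i v = upd b x i v.
    by move=> i v Pv; rewrite /upd; case: eqP => // _; exact: H.
  by split=> s i hi; move: (s i hi); rewrite (IH _ _ (U i) h).
Qed.
End Coinc.

Definition qpref (qs : seq (bool * nat)) (f : formula) : formula :=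
  foldr (fun q g => if q.1 then FAll q.2 g else FEx q.2 g) f qs.

Fixpoint chq (k : nat) (c : bool) : seq (bool * nat) :=
  match k with 0 => [::] | k'.+1 => (c, k'.+1) :: chq k' (~~ c) end.

Definition FImp p q := FOr (FNot p) q.

Section Push.
Variables (n : nat) (z : n.-tuple bool).
Hypothesis n0 : 0 < n.

Definition Pk (k : nat) : pred nat := fun v => k < v.

Lemma inv_upd k f a j i : allv (Pk k) f -> j <= k -> (sat z (upd a j i) f <-> sat z a f).
Proof.
move=> h jk; apply: (@sat_agree _ z (Pk k)) h => v; rewrite /Pk /upd => kv.
by case: eqP => // ?; subst; lia.
Qed.

Lemma allvS k f : allv (Pk k.+1) f -> allv (Pk k) f.
Proof. by apply: allv_mono => v; rewrite /Pk; lia. Qed.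

Lemma dom1 : (1 <= 1 <= n). Proof. by rewrite leqnn n0. Qed.

Lemma push_conj k : forall c a A P1 P2 X1 X2,
  allv (Pk k) A -> allv (Pk k) P1 -> allv (Pk k) P2 ->
  (forall b, sat z b P1 -> sat z b P2 -> False) ->
  (sat z a (qpref (chq k c) (FAnd A (FAnd (FImp P1 X1) (FImp P2 X2)))) <->
   sat z a A /\ (sat z a P1 -> sat z a (qpref (chq k c) X1)) /\
   (sat z a P2 -> sat z a (qpref (chq k c) X2))).
Proof.
elim: k => [|k IH] c a A P1 P2 X1 X2 hA h1 h2 ex.
  rewrite /=; split.
    by move=> [hA' [[?|?] [?|?]]]; split=> //; split.
  move=> [hA' [H1 H2]]; split=> //; split.
    by case: (classic (sat z a P1)) => p; [right; auto | left].
  by case: (classic (sat z a P2)) => p; [right; auto | left].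
have E : forall i, sat z (upd a k.+1 i) (qpref (chq k (~~c)) (FAnd A (FAnd (FImp P1 X1) (FImp P2 X2)))) <->
   sat z a A /\ (sat z a P1 -> sat z (upd a k.+1 i) (qpref (chq k (~~c)) X1)) /\
   (sat z a P2 -> sat z (upd a k.+1 i) (qpref (chq k (~~c)) X2)).
  move=> i; rewrite (IH (~~c) (upd a k.+1 i) A P1 P2 X1 X2 (allvS hA) (allvS h1) (allvS h2) ex).
  by rewrite (inv_upd a i hA (leqnn _)) (inv_upd a i h1 (leqnn _)) (inv_upd a i h2 (leqnn _)).
case: c E => /= E; split.
- move=> H; have [hA' _] := (proj1 (E 1)) (H 1 dom1); split=> //.
  split=> hp i hi; have [_ [H1 H2]] := (proj1 (E i)) (H i hi).
    exact: H1.
  exact: H2.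
- move=> [hA' [H1 H2]] i hi; apply: (proj2 (E i)); split=> //; split=> hp.
    exact: H1.
  exact: H2.
- move=> [i [hi Hi]]; have [hA' [H1 H2]] := proj1 (E i) Hi.
  split=> //; split=> hp; exists i; split=> //; [exact: H1 | exact: H2].
- move=> [hA' [H1 H2]].
  case: (classic (sat z a P1)) => p1.
    have [i [hi s]] := H1 p1; exists i; split=> //; apply: (proj2 (E i)).
    split; first done. split; first by move=> _; exact: s.
    by move=> p2; case: (ex _ p1 p2).
  case: (classic (sat z a P2)) => p2.
    have [i [hi s]] := H2 p2; exists i; split=> //; apply: (proj2 (E i)).
    split; first done. split; last by move=> _; exact: s.
    by move=> p1'; case: (p1 p1').
  exists 1; split; first exact: dom1.
  by apply: (proj2 (E 1)); split=> //; split=> ?.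
Qed.

Lemma push_disj k : forall c a A R1 R2 X1 X2,
  allv (Pk k) A -> allv (Pk k) R1 -> allv (Pk k) R2 ->
  (forall b, sat z b R1 -> sat z b R2 -> False) ->
  (sat z a (qpref (chq k c) (FOr A (FOr (FAnd R1 X1) (FAnd R2 X2)))) <->
   sat z a A \/ (sat z a R1 /\ sat z a (qpref (chq k c) X1)) \/
   (sat z a R2 /\ sat z a (qpref (chq k c) X2))).
Proof.
elim: k => [|k IH] c a A R1 R2 X1 X2 hA h1 h2 ex.
  by rewrite /=.
have E : forall i, sat z (upd a k.+1 i) (qpref (chq k (~~c)) (FOr A (FOr (FAnd R1 X1) (FAnd R2 X2)))) <->
   sat z a A \/ (sat z a R1 /\ sat z (upd a k.+1 i) (qpref (chq k (~~c)) X1)) \/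
   (sat z a R2 /\ sat z (upd a k.+1 i) (qpref (chq k (~~c)) X2)).
  move=> i; rewrite (IH (~~c) (upd a k.+1 i) A R1 R2 X1 X2 (allvS hA) (allvS h1) (allvS h2) ex).
  by rewrite (inv_upd a i hA (leqnn _)) (inv_upd a i h1 (leqnn _)) (inv_upd a i h2 (leqnn _)).
case: c E => /= E; split.
- move=> H.
  case: (classic (sat z a A)) => pa; first by left.
  case: (classic (sat z a R1)) => r1.
    right; left; split=> // i hi; have := (proj1 (E i)) (H i hi).
    by move=> [//|[[_ ?]|[r2 _]]] //; case: (ex _ r1 r2).
  case: (classic (sat z a R2)) => r2.
    right; right; split=> // i hi; have := (proj1 (E i)) (H i hi).
    by move=> [//|[[r1' _]|[_ ?]]] //; case: (r1 r1').
  by have := (proj1 (E 1)) (H 1 dom1); tauto.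
- move=> [pa|[[r1 H1]|[r2 H2]]] i hi; apply: (proj2 (E i)).
  + by left.
  + by right; left; split=> //; apply: H1.
  + by right; right; split=> //; apply: H2.
- move=> [i [hi Hi]]; case: (proj1 (E i) Hi) => [pa|[[r1 s]|[r2 s]]].
  + by left.
  + by right; left; split=> //; exists i.
  + by right; right; split=> //; exists i.
- move=> [pa|[[r1 [i [hi s]]]|[r2 [i [hi s]]]]].
  + by exists 1; split; [exact: dom1 | apply: (proj2 (E 1)); left].
  + by exists i; split=> //; apply: (proj2 (E i)); right; left.
  + by exists i; split=> //; apply: (proj2 (E i)); right; right.
Qed.

Lemma push_and k : forall c a N S, allv (Pk k) S ->
  (sat z a (qpref (chq k c) (FAnd N S)) <-> sat z a (qpref (chq k c) N) /\ sat z a S).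
Proof.
elim: k => [|k IH] c a N S hS; first by [].
have E : forall i, sat z (upd a k.+1 i) (qpref (chq k (~~c)) (FAnd N S)) <->
   sat z (upd a k.+1 i) (qpref (chq k (~~c)) N) /\ sat z a S.
  by move=> i; rewrite (IH (~~c) (upd a k.+1 i) N S (allvS hS)) (inv_upd a i hS (leqnn _)).
case: c E => /= E; split.
- move=> H; split; last by have [] := (proj1 (E 1)) (H 1 dom1).
  by move=> i hi; have [] := (proj1 (E i)) (H i hi).
- by move=> [H s] i hi; apply/E; split; auto.
- by move=> [i [hi /E [s1 s2]]]; split=> //; exists i.
- by move=> [[i [hi s]] s2]; exists i; split=> //; apply/E.
Qed.
End Push.

Definition GEs (t lo hi : nat) : Prop := t = 0 \/ lo + t <= hi.
Definition up1 t := if t <= 1 then 0 else t.+1 %/ 2.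
Definition up2 t := if t <= 1 then 0 else t.+1 - t.+1 %/ 2.

Lemma arith_up n t lo m : 1 <= lo -> m <= n ->
  (GEs t lo m <-> GEs (minn t 1) lo m /\
     forall i, 1 <= i <= n -> lo <= i < m -> GEs (up1 t) lo i \/ GEs (up2 t) i m).
Proof.
rewrite /GEs /up1 /up2 => h1 h2; case: (leqP t 1) => ht.
  split; [move=> H; split; [lia | move=> i _ _; left; lia] | move=> [H _]; lia].
split.
  move=> [t0|H]; first lia.
  split; first lia.
  move=> i _ /andP[l1 l2]; lia.
move=> [H1 H2]; right.
case: (leqP (lo + t) m) => // hlt.
have := H2 (maxn lo (m.+1 - (t.+1 - t.+1 %/ 2))).
have hm : lo < m by lia.
have : 1 <= maxn lo (m.+1 - (t.+1 - t.+1 %/ 2)) <= n by lia.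
move=> hi /(_ hi); have : lo <= maxn lo (m.+1 - (t.+1 - t.+1 %/ 2)) < m by lia.
move=> hh /(_ hh); lia.
Qed.

Lemma arith_low n t lo m : 1 <= lo -> m <= n ->
  (GEs t lo m <-> (t <= 1 /\ GEs t lo m) \/
     (1 < t /\ exists i, (1 <= i <= n) /\ (lo < i < m) /\ GEs (t %/ 2) lo i /\ GEs (t - t %/ 2) i m)).
Proof.
rewrite /GEs => h1 h2; case: (leqP t 1) => ht.
  split; first by left. by move=> [[]|[]] //; lia.
split.
  move=> [t0|H]; first lia.
  right; split=> //; exists (lo + t %/ 2); lia.
move=> [[]|[_ [i [hi [hh [H1 H2]]]]]]; first lia.
right; lia.
Qed.

Definition FT := FEq TMin TMin.
Definition FF := FLt TMin TMin.
Definition FLe x y := FNot (FLt y x).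
Definition GEat t lo hi := if t == 0 then FT else FLt lo hi.

Fixpoint M (k : nat) (c : bool) (lo m hi : term) (t1 t2 : nat) : formula :=
  match k with
  | 0 => if c then FAnd (GEat t1 lo m) (GEat t2 m hi) else FOr (GEat t1 lo m) (GEat t2 m hi)
  | k'.+1 => let x := TVar k'.+1 in
    if c then
      FAnd (FAnd (GEat (minn t1 1) lo m) (GEat (minn t2 1) m hi))
        (FAnd (FImp (FAnd (FLe lo x) (FLt x m)) (M k' false lo x m (up1 t1) (up2 t1)))
              (FImp (FAnd (FLe m x) (FLt x hi)) (M k' false m x hi (up1 t2) (up2 t2))))
    else
      FOr (FOr (if t1 <= 1 then GEat t1 lo m else FF) (if t2 <= 1 then GEat t2 m hi else FF))
        (FOr (FAnd (if 1 < t1 then FAnd (FLt lo x) (FLt x m) else FF) (M k' true lo x m (t1 %/ 2) (t1 - t1 %/ 2)))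
             (FAnd (if 1 < t2 then FAnd (FLt m x) (FLt x hi) else FF) (M k' true m x hi (t2 %/ 2) (t2 - t2 %/ 2))))
  end.

Fixpoint Bnd (k : nat) (c : bool) : nat :=
  match k with 0 => 1 | k'.+1 => if c then 2 * Bnd k' false - 1 else 2 * Bnd k' true end.

Definition Sem c t1 t2 lo m hi : Prop :=
  if c then GEs t1 lo m /\ GEs t2 m hi else GEs t1 lo m \/ GEs t2 m hi.

Lemma allv_GEat P t lo hi : termP P lo -> termP P hi -> allv P (GEat t lo hi).
Proof. by rewrite /GEat; case: eqP => //= _ -> ->. Qed.

Section Main.
Variables (n : nat) (z : n.-tuple bool).
Hypothesis n0 : 0 < n.

Notation ev a t := (eval_term n a t).

Lemma ev_upd k t a j i : termP (Pk k) t -> j <= k -> ev (upd a j i) t = ev a t.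
Proof.
by case: t => //= v; rewrite /Pk /upd => kv jk; case: eqP => // ?; subst; lia.
Qed.

Lemma GEat_sem a t lo hi : t <= 1 -> (sat z a (GEat t lo hi) <-> GEs t (ev a lo) (ev a hi)).
Proof.
rewrite /GEat /GEs; case: eqP => [->|t0] /= ht; first by split=> // _; left.
split; [move=> h; right; lia | move=> [?|?]; lia].
Qed.

Lemma sat_between a lo x m : sat z a (FAnd (FLe lo x) (FLt x m)) <-> ev a lo <= ev a x < ev a m.
Proof. by rewrite /=; split; [move=> [h1 h2]; lia | move=> h; split; lia]. Qed.

Lemma sat_strict a lo x m : sat z a (FAnd (FLt lo x) (FLt x m)) <-> ev a lo < ev a x < ev a m.
Proof. by rewrite /=; split; [move=> [h1 h2]; lia | move=> h; split; lia]. Qed.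

Lemma termPS k t : termP (Pk k.+1) t -> termP (Pk k) t.
Proof. by apply: termP_mono => v; rewrite /Pk; lia. Qed.

Lemma sat_and a f g : sat z a (FAnd f g) <-> sat z a f /\ sat z a g.
Proof. by []. Qed.

Lemma sat_or a f g : sat z a (FOr f g) <-> sat z a f \/ sat z a g.
Proof. by []. Qed.

Lemma sat_ifGE a t lo hi : sat z a (if t <= 1 then GEat t lo hi else FF) <-> t <= 1 /\ GEs t (ev a lo) (ev a hi).
Proof.
case: leqP => h; first by rewrite GEat_sem //; split=> [?|[]]. 
by rewrite /=; split; [lia | move=> [] ?; lia].
Qed.

Lemma sat_ifstrict a t lo x m : sat z a (if 1 < t then FAnd (FLt lo x) (FLt x m) else FF) <->
   1 < t /\ ev a lo < ev a x < ev a m.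
Proof.
case: ltnP => h; first by rewrite sat_strict; split=> [?|[]].
by rewrite /=; split; [lia | move=> [] ?; lia].
Qed.

Lemma up_bnd t B : t <= 2 * B - 1 -> up1 t <= B /\ up2 t <= B.
Proof. by move=> h0; rewrite /up1 /up2; case: (leqP t 1) => h; lia. Qed.

Lemma allv_if P (b : bool) f g : allv P f -> allv P g -> allv P (if b then f else g).
Proof. by case: b. Qed.

Lemma M_sem k : forall c lo m hi t1 t2 a,
  termP (Pk k) lo -> termP (Pk k) m -> termP (Pk k) hi ->
  1 <= ev a lo <= n -> 1 <= ev a m <= n -> 1 <= ev a hi <= n ->
  t1 <= Bnd k c -> t2 <= Bnd k c ->
  (sat z a (qpref (chq k c) (M k c lo m hi t1 t2)) <-> Sem c t1 t2 (ev a lo) (ev a m) (ev a hi)).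
Proof.
elim: k => [|k IH] c lo m hi t1 t2 a hlo hm hhi rlo rm rhi b1 b2.
  case: c b1 b2 => /= b1 b2; rewrite !GEat_sem //.
have hxP : termP (Pk k) (TVar k.+1) by rewrite /= /Pk.
have evx : forall i, ev (upd a k.+1 i) (TVar k.+1) = i by move=> i; rewrite /= /upd eqxx.
have evlo : forall i, ev (upd a k.+1 i) lo = ev a lo by move=> i; apply: ev_upd hlo _.
have evm : forall i, ev (upd a k.+1 i) m = ev a m by move=> i; apply: ev_upd hm _.
have evhi : forall i, ev (upd a k.+1 i) hi = ev a hi by move=> i; apply: ev_upd hhi _.
case: c b1 b2 => /= b1 b2.
- have [u11 u12] := up_bnd b1; have [u21 u22] := up_bnd b2.
  have E : forall i, 0 < i <= n -> (sat z (upd a k.+1 i)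
    (qpref (chq k false)
       (FAnd (FAnd (GEat (minn t1 1) lo m) (GEat (minn t2 1) m hi))
          (FAnd
             (FImp (FAnd (FLe lo (TVar k.+1)) (FLt (TVar k.+1) m))
                (M k false lo (TVar k.+1) m (up1 t1) (up2 t1)))
             (FImp (FAnd (FLe m (TVar k.+1)) (FLt (TVar k.+1) hi))
                (M k false m (TVar k.+1) hi (up1 t2) (up2 t2)))))) <->
     (GEs (minn t1 1) (ev a lo) (ev a m) /\ GEs (minn t2 1) (ev a m) (ev a hi)) /\
     (ev a lo <= i < ev a m -> Sem false (up1 t1) (up2 t1) (ev a lo) i (ev a m)) /\
     (ev a m <= i < ev a hi -> Sem false (up1 t2) (up2 t2) (ev a m) i (ev a hi))).
    move=> i hi'.
    have hA : allv (Pk k) (FAnd (GEat (minn t1 1) lo m) (GEat (minn t2 1) m hi)).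
      by rewrite /= !allv_GEat // termPS.
    have hP1 : allv (Pk k) (FAnd (FLe lo (TVar k.+1)) (FLt (TVar k.+1) m)).
      by rewrite /= (termPS hm) (termPS hlo) /Pk ltnSn.
    have hP2 : allv (Pk k) (FAnd (FLe m (TVar k.+1)) (FLt (TVar k.+1) hi)).
      by rewrite /= (termPS hm) (termPS hhi) /Pk ltnSn.
    have hex : forall b, sat z b (FAnd (FLe lo (TVar k.+1)) (FLt (TVar k.+1) m)) ->
        sat z b (FAnd (FLe m (TVar k.+1)) (FLt (TVar k.+1) hi)) -> False.
      by move=> b; rewrite !sat_between => h1 h2; lia.
    rewrite (push_conj (z:=z) n0 false (upd a k.+1 i) _ _ hA hP1 hP2 hex).
    have r1 : 1 <= ev (upd a k.+1 i) lo <= n by rewrite evlo.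
    have r2 : 1 <= ev (upd a k.+1 i) m <= n by rewrite evm.
    have r3 : 1 <= ev (upd a k.+1 i) hi <= n by rewrite evhi.
    have rx : 1 <= ev (upd a k.+1 i) (TVar k.+1) <= n by rewrite evx.
    rewrite (IH false lo (TVar k.+1) m (up1 t1) (up2 t1) (upd a k.+1 i) (termPS hlo) hxP (termPS hm) r1 rx r2 u11 u12).
    rewrite (IH false m (TVar k.+1) hi (up1 t2) (up2 t2) (upd a k.+1 i) (termPS hm) hxP (termPS hhi) r2 rx r3 u21 u22).
    rewrite sat_and (GEat_sem _ _ _ (geq_minr _ _)) (GEat_sem _ _ _ (geq_minr _ _)).
    by rewrite !sat_between evx evlo evm evhi.
  have q1 : 1 <= ev a lo by case/andP: rlo.
  have q2 : ev a m <= n by case/andP: rm.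
  have q3 : 1 <= ev a m by case/andP: rm.
  have q4 : ev a hi <= n by case/andP: rhi.
  rewrite (arith_up t1 q1 q2) (arith_up t2 q3 q4).
  split.
  + move=> H; have [[g1 g2] _] := proj1 (E 1 (dom1 n0)) (H 1 (dom1 n0)).
    split; split=> // i hi' hh; have [_ [e1 e2]] := proj1 (E i hi') (H i hi').
      exact: e1 hh.
    exact: e2 hh.
  + move=> [[g1 f1] [g2 f2]] i hi'; apply/(E i hi'); split=> //; split=> hh.
      exact: f1 i hi' hh.
    exact: f2 i hi' hh.
- have hb1 : t1 %/ 2 <= Bnd k true /\ t1 - t1 %/ 2 <= Bnd k true by lia.
  have hb2 : t2 %/ 2 <= Bnd k true /\ t2 - t2 %/ 2 <= Bnd k true by lia.
  case: hb1 => u11 u12; case: hb2 => u21 u22.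
  have q1 : 1 <= ev a lo by case/andP: rlo.
  have q2 : ev a m <= n by case/andP: rm.
  have q3 : 1 <= ev a m by case/andP: rm.
  have q4 : ev a hi <= n by case/andP: rhi.
  have E : forall i, 0 < i <= n -> (sat z (upd a k.+1 i)
      (qpref (chq k true)
         (FOr
            (FOr (if t1 <= 1 then GEat t1 lo m else FF)
               (if t2 <= 1 then GEat t2 m hi else FF))
            (FOr
               (FAnd
                  (if 1 < t1
                   then FAnd (FLt lo (TVar k.+1)) (FLt (TVar k.+1) m)
                   else FF)
                  (M k true lo (TVar k.+1) m (t1 %/ 2) (t1 - t1 %/ 2)))
               (FAnd
                  (if 1 < t2
                   then FAnd (FLt m (TVar k.+1)) (FLt (TVar k.+1) hi)
                   else FF)
                  (M k true m (TVar k.+1) hi (t2 %/ 2) (t2 - t2 %/ 2)))))) <->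
     ((t1 <= 1 /\ GEs t1 (ev a lo) (ev a m)) \/ (t2 <= 1 /\ GEs t2 (ev a m) (ev a hi))) \/
     ((1 < t1 /\ ev a lo < i < ev a m) /\ Sem true (t1 %/ 2) (t1 - t1 %/ 2) (ev a lo) i (ev a m)) \/
     ((1 < t2 /\ ev a m < i < ev a hi) /\ Sem true (t2 %/ 2) (t2 - t2 %/ 2) (ev a m) i (ev a hi))).
    move=> i hi'.
    have hA : allv (Pk k) (FOr (if t1 <= 1 then GEat t1 lo m else FF)
               (if t2 <= 1 then GEat t2 m hi else FF)).
      by apply/andP; split; apply: allv_if => //; apply: allv_GEat => //; apply: termPS.
    have hR1 : allv (Pk k) (if 1 < t1 then FAnd (FLt lo (TVar k.+1)) (FLt (TVar k.+1) m) else FF).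
      by apply: allv_if => //; rewrite /= (termPS hm) (termPS hlo) /Pk ltnSn.
    have hR2 : allv (Pk k) (if 1 < t2 then FAnd (FLt m (TVar k.+1)) (FLt (TVar k.+1) hi) else FF).
      by apply: allv_if => //; rewrite /= (termPS hm) (termPS hhi) /Pk ltnSn.
    have hex : forall b, sat z b (if 1 < t1 then FAnd (FLt lo (TVar k.+1)) (FLt (TVar k.+1) m) else FF) ->
        sat z b (if 1 < t2 then FAnd (FLt m (TVar k.+1)) (FLt (TVar k.+1) hi) else FF) -> False.
      by move=> b; rewrite !sat_ifstrict => h1 h2; lia.
    rewrite (push_disj (z:=z) n0 true (upd a k.+1 i) _ _ hA hR1 hR2 hex).
    have r1 : 1 <= ev (upd a k.+1 i) lo <= n by rewrite evlo.
    have r2 : 1 <= ev (upd a k.+1 i) m <= n by rewrite evm.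
    have r3 : 1 <= ev (upd a k.+1 i) hi <= n by rewrite evhi.
    have rx : 1 <= ev (upd a k.+1 i) (TVar k.+1) <= n by rewrite evx.
    rewrite (IH true lo (TVar k.+1) m _ _ (upd a k.+1 i) (termPS hlo) hxP (termPS hm) r1 rx r2 u11 u12).
    rewrite (IH true m (TVar k.+1) hi _ _ (upd a k.+1 i) (termPS hm) hxP (termPS hhi) r2 rx r3 u21 u22).
    rewrite sat_or !sat_ifGE !sat_ifstrict.
    by rewrite evx evlo evm evhi.
  rewrite (arith_low t1 q1 q2) (arith_low t2 q3 q4).
  split.
  + move=> [i [hi' H]]; case: (proj1 (E i hi') H) => [[h|h]|[[[tt hh] [s1 s2]]|[[tt hh] [s1 s2]]]].
    * by left; left.
    * by right; left.
    * by left; right; split=> //; exists i.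
    * by right; right; split=> //; exists i.
  + move=> [[h|[tt [i [hi' [hh [s1 s2]]]]]]|[h|[tt [i [hi' [hh [s1 s2]]]]]]].
    * by exists 1; split; [exact: dom1 | apply/(E 1 (dom1 n0)); left; left].
    * by exists i; split=> //; apply/(E i hi'); right; left.
    * by exists 1; split; [exact: dom1 | apply/(E 1 (dom1 n0)); left; right].
    * by exists i; split=> //; apply/(E i hi'); right; right.
Qed.
End Main.

Lemma qpref_cat xs ys f : qpref (xs ++ ys) f = qpref xs (qpref ys f).
Proof. by rewrite /qpref foldr_cat. Qed.

Lemma nquant_qpref qs f : nquant (qpref qs f) = size qs + nquant f.
Proof. by elim: qs => //= [[[] x]] qs IH /=; rewrite IH. Qed.

Lemma allv_qpref P qs f : allv P (qpref qs f) = allv P f.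
Proof. by elim: qs => //= [[[] x]] qs IH /=; rewrite IH. Qed.

Lemma size_chq k c : size (chq k c) = k.
Proof. by elim: k c => //= k IH c; rewrite IH. Qed.

Lemma mem_chq k c v : (v \in map snd (chq k c)) = (0 < v <= k).
Proof.
elim: k c => [|k IH] c /=; first by rewrite in_nil; lia.
rewrite in_cons IH; case: eqP => [->|ne] /=; first by rewrite ltnSn.
apply/idP/idP; lia.
Qed.

Lemma nquant_GEat t lo hi : nquant (GEat t lo hi) = 0.
Proof. by rewrite /GEat; case: (t == 0). Qed.

Lemma nquant_if (b : bool) f g : nquant (if b then f else g) = if b then nquant f else nquant g.
Proof. by case: b. Qed.

Lemma nquant_M k c lo m hi t1 t2 : nquant (M k c lo m hi t1 t2) = 0.
Proof.
elim: k c lo m hi t1 t2 => [|k IH] [] lo m hi t1 t2 /=;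
  by rewrite ?nquant_if ?nquant_GEat ?IH ?if_same.
Qed.

Lemma allv_M (P : pred nat) k c lo m hi t1 t2 :
  (forall j, 0 < j <= k -> P j) -> termP P lo -> termP P m -> termP P hi ->
  allv P (M k c lo m hi t1 t2).
Proof.
elim: k c lo m hi t1 t2 => [|k IH] c lo m hi t1 t2 hP hlo hm hhi.
  by case: c => /=; rewrite !allv_GEat.
have hx : P k.+1 by apply: hP; lia.
have hP' : forall j, 0 < j <= k -> P j by move=> j hj; apply: hP; lia.
case: c => /=.
- by rewrite !allv_GEat // hlo hm hhi hx !IH.
- rewrite !IH //; apply/andP; split; first by apply/andP; split; apply: allv_if => //; apply: allv_GEat.
  by rewrite !andbT; apply/andP; split; apply: allv_if => //=; rewrite ?hlo ?hm ?hhi hx.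
Qed.

Lemma fv_qpref qs f : free_vars (qpref qs f) = [seq v <- free_vars f | v \notin map snd qs].
Proof.
elim: qs => [|[b x] qs IH] /=; first by rewrite filter_predT.
by case: b; rewrite /= IH -filter_predI; apply: eq_filter => v /=; rewrite in_cons negb_or andbC.
Qed.

Lemma tv_termP (P : pred nat) t v : v \in term_vars t -> termP P t -> P v.
Proof. by case: t => //= x; rewrite in_cons in_nil orbF => /eqP ->. Qed.

Lemma fv_allv (P : pred nat) f v : v \in free_vars f -> allv P f -> P v.
Proof.
elim: f => /=.
- by move=> t1 t2; rewrite mem_cat => /orP[h|h] /andP[h1 h2]; [exact: tv_termP h h1 | exact: tv_termP h h2].
- by move=> t1 t2; rewrite mem_cat => /orP[h|h] /andP[h1 h2]; [exact: tv_termP h h1 | exact: tv_termP h h2].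
- by move=> t h h1; exact: tv_termP h h1.
- by [].
- by move=> g IHg h IHh; rewrite mem_cat => /orP[/IHg H /andP[/H]|/IHh H /andP[_ /H]].
- by move=> g IHg h IHh; rewrite mem_cat => /orP[/IHg H /andP[/H]|/IHh H /andP[_ /H]].
- by move=> x g IH; rewrite mem_filter => /andP[_ /IH].
- by move=> x g IH; rewrite mem_filter => /andP[_ /IH].
Qed.

Section Cong.
Variables (n : nat) (z : n.-tuple bool).

Lemma qpref_congr qs N N' : forall a,
  (forall b, (forall v, v \notin map snd qs -> b v = a v) -> (sat z b N <-> sat z b N')) ->
  (sat z a (qpref qs N) <-> sat z a (qpref qs N')).
Proof.
elim: qs => [|[c x] qs IH] a H /=; first by apply: H.
have H' : forall i, sat z (upd a x i) (qpref qs N) <-> sat z (upd a x i) (qpref qs N').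
  move=> i; apply: IH => b hb; apply: H => v; rewrite in_cons negb_or => /andP[nx nq].
  by rewrite hb // /upd (negbTE nx).
case: c H => /= H; split.
- by move=> h i hi; apply/H'; apply: h.
- by move=> h i hi; apply/H'; apply: h.
- by move=> [i [hi h]]; exists i; split=> //; apply/H'.
- by move=> [i [hi h]]; exists i; split=> //; apply/H'.
Qed.
End Cong.

Definition G (K : nat) (N : formula) := FEx K.+1 (qpref (chq K true) N).

Definition Nps (n K q : nat) (b : bool) : formula :=
  FAnd (M K true TMin (TVar K.+1) TMax q (n.-1 - q))
       (if b then FS (TVar K.+1) else FNot (FS (TVar K.+1))).

Fixpoint allq (K L : nat) : seq (bool * nat) :=
  match L with 0 => [::] | L'.+1 => (true, K.+1 + L'.+1) :: allq K L' end.

Definition sel u N1 N2 :=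
  FOr (FAnd (FEq (TVar u) TMin) N1) (FAnd (FNot (FEq (TVar u) TMin)) N2).

Fixpoint mergeF (K L : nat) (f : nat -> formula) : formula :=
  match L with
  | 0 => f 0
  | L'.+1 => sel (K.+1 + L'.+1) (mergeF K L' f) (mergeF K L' (fun j => f (j + 2 ^ L')))
  end.

Lemma mem_allq K L v : (v \in map snd (allq K L)) = (K.+1 < v <= K.+1 + L).
Proof.
elim: L => [|L IH] /=; first by rewrite in_nil; lia.
rewrite in_cons IH; case: eqP => [->|ne] /=; first by lia.
apply/idP/idP; lia.
Qed.

Section Sem2.
Variables (n : nat) (z : n.-tuple bool).
Hypothesis n0 : 0 < n.

Lemma G_sem K q b a : q < n -> n.-1 <= Bnd K true ->
  (sat z a (G K (Nps n K q b)) <-> nth false z q = b).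
Proof.
move=> qn bn.
have hS : allv (Pk K) (if b then FS (TVar K.+1) else FNot (FS (TVar K.+1))).
  by case: b; rewrite /= /Pk ltnSn.
rewrite /G /Nps /=.
have E : forall i, 0 < i <= n -> (sat z (upd a K.+1 i) (qpref (chq K true) (FAnd
   (M K true TMin (TVar K.+1) TMax q (n.-1 - q))
   (if b then FS (TVar K.+1) else FNot (FS (TVar K.+1))))) <->
   (GEs q 1 i /\ GEs (n.-1 - q) i n) /\ (nth false z i.-1 = b)).
  move=> i hi.
  rewrite (push_and z n0 true (upd a K.+1 i) _ hS).
  have evx : eval_term n (upd a K.+1 i) (TVar K.+1) = i by rewrite /= /upd eqxx.
  rewrite (M_sem z n0 (c:=true) (lo:=TMin) (m:=TVar K.+1) (hi:=TMax)) ;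
    rewrite /= ?/upd ?eqxx ?/Pk ?ltnSn //; try lia.
  clear hS; case: b => /=; rewrite ?eqxx; case: (nth false z i.-1); split=> -[h1 h2]; split=> //.
rewrite /GEs in E; split.
- move=> [i [hi /(E i hi) [h1 h2]]].
  have -> : q = i.-1 by lia.
  exact: h2.
- move=> h; exists q.+1; have hq : 0 < q.+1 <= n by lia.
  split=> //; apply/(E _ hq); split; first lia.
  exact: h.
Qed.

Lemma merge_sem K L : forall (f : nat -> formula) a,
  (0 < L -> 1 < n) -> (forall j, allv (fun v => v <= K.+1) (f j)) ->
  (sat z a (qpref (allq K L) (G K (mergeF K L f))) <->
   forall j, j < 2 ^ L -> sat z a (G K (f j))).
Proof.
elim: L => [|L IH] f a hn hf /=.
  split=> [h j hj|h]; last by apply: h.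
  by have -> : j = 0 by move: hj; lia.
set u := K.+1 + L.+1.
have hn2 : 1 < n by apply: hn.
have coin : forall N i, allv (fun v => v <= K.+1) N ->
    (sat z (upd a u i) (G K N) <-> sat z a (G K N)).
  move=> N i hN; apply: (@sat_agree _ z (fun v => v <= K.+1)).
    by move=> v hv; rewrite /upd; case: eqP => // ?; subst; rewrite /u in hv; lia.
  by rewrite /G /= allv_qpref.
have E : forall i, 0 < i <= n ->
    (sat z (upd a u i) (qpref (allq K L) (G K (sel u (mergeF K L f)
           (mergeF K L (fun j => f (j + 2 ^ L)))))) <->
     if i == 1 then forall j, j < 2 ^ L -> sat z a (G K (f j))
     else forall j, j < 2 ^ L -> sat z a (G K (f (j + 2 ^ L)))).
  move=> i hi.
  have -> : forall N, qpref (allq K L) (G K N) = qpref (allq K L ++ (false, K.+1) :: chq K true) N.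
    by move=> N; rewrite qpref_cat.
  have nu : u \notin map snd (allq K L ++ (false, K.+1) :: chq K true).
    by rewrite map_cat mem_cat /= in_cons mem_allq mem_chq /u; apply/negP; case/orP; [lia | case/orP; lia].
  case: eqP => [i1|ni1].
  - rewrite (qpref_congr _ (N' := mergeF K L f)); last first.
      move=> b hb; have bu : b u = i by rewrite hb // /upd eqxx.
      by rewrite /sel /= bu i1; split=> [[[_ h]|[h _]]|h] //; left.
    rewrite qpref_cat -/(G K _) IH; last 2 first.
    + by move=> hl; apply: hn.
    + exact: hf.
    by split=> h j hj; move: (h j hj); rewrite coin.
  - rewrite (qpref_congr _ (N' := mergeF K L (fun j => f (j + 2 ^ L)))); last first.
      move=> b hb; have bu : b u = i by rewrite hb // /upd eqxx.
      by rewrite /sel /= bu; split=> [[[h _]|[_ h]]|h] //; right.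
    rewrite qpref_cat -/(G K _) IH; last 2 first.
    + by move=> hl; apply: hn.
    + by move=> j; apply: hf.
    by split=> h j hj; move: (h j hj); rewrite coin.
split.
- move=> H j hj.
  case: (ltnP j (2 ^ L)) => hjL.
    by apply: (proj1 (E 1 (dom1 n0)) (H 1 (dom1 n0))).
  have h2 : 0 < 2 <= n by lia.
  have := proj1 (E 2 h2) (H 2 h2) => /= /(_ (j - 2 ^ L)).
  rewrite subnK //; apply; rewrite ?expnS in hj *; lia.
- move=> H i hi; apply/(E i hi); case: eqP => _ j hj; apply: H.
    rewrite ?expnS; lia.
  rewrite ?expnS; lia.
Qed.
End Sem2.

Lemma expn_pow a b : expn a b = Nat.pow a b.
Proof. by elim: b => //= b IH; rewrite expnS IH mulnE. Qed.

Lemma Bnd_pos k c : 0 < Bnd k c.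
Proof. elim: k c => [|k IH] [] //=; have := IH true; have := IH false; lia. Qed.

Lemma Bnd_even j : expn 4 j + 1 <= 2 * Bnd (2 * j) true.
Proof.
elim: j => [|j IH] //.
have -> : 2 * j.+1 = (2 * j).+2 by lia.
rewrite expnS /=; have := Bnd_pos (2 * j) true; lia.
Qed.

Lemma INR_expn2 m : INR (expn 2 m) = (2 ^ m)%R.
Proof.
elim: m => [|m IH] //; rewrite expnS mulnE mult_INR IH /=; lra.
Qed.

Lemma log2_ge m N : 0 < N -> expn 2 m <= N -> (INR m <= log2R (INR N))%R.
Proof.
move=> hN h; rewrite /log2R.
have l2 : (0 < ln 2)%R by have := ln_lt_2; lra.
have h1 : (ln (2 ^ m) <= ln (INR N))%R.
  have p : (0 < 2 ^ m)%R by apply: pow_lt; lra.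
  have : (2 ^ m <= INR N)%R by rewrite -INR_expn2; apply: le_INR; apply/leP.
  case/Rle_lt_or_eq_dec => e; first by apply: Rlt_le; apply: ln_increasing.
  by rewrite e; apply: Rle_refl.
rewrite ln_pow in h1; last lra.
apply: (Rmult_le_reg_r (ln 2)) => //.
rewrite /Rdiv Rmult_assoc Rinv_l; lra.
Qed.

Definition dpos n (w v : n.-tuple bool) : nat :=
  if [pick i : 'I_n | nth false w i != nth false v i] is Some i then val i else 0.

Lemma dpos_lt n (w v : n.-tuple bool) : 0 < n -> dpos w v < n.
Proof. by rewrite /dpos; case: pickP => // i _ _; exact: ltn_ord. Qed.

Lemma dpos_diff n (w v : n.-tuple bool) : v != w -> nth false w (dpos w v) != nth false v (dpos w v).
Proof.
rewrite /dpos; case: pickP => // H; move/eqP; case; apply: val_inj.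
apply: (eq_from_nth (x0 := false)); first by rewrite !size_tuple.
move=> i; rewrite size_tuple => hi; have := H (Ordinal hi); rewrite /= => /negbFE/eqP.
by move=> ->.
Qed.

Lemma allv_mergeF (P : pred nat) K L : forall f, (forall j, allv P (f j)) ->
  (forall j, 0 < j <= L -> P (K.+1 + j)) -> allv P (mergeF K L f).
Proof.
elim: L => [|L IH] f hf hP //=.
have hu : P (K.+1 + L.+1) by apply: hP; lia.
rewrite hu !IH //= => j hj; apply: hP; lia.
Qed.

Lemma nquant_mergeF K L : forall f, (forall j, nquant (f j) = 0) -> nquant (mergeF K L f) = 0.
Proof. by elim: L => [|L IH] f hf //=; rewrite !IH. Qed.

Lemma filter_nil (l B : seq nat) : (forall v, v \in l -> v \in B) -> [seq v <- l | v \notin B] = [::].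
Proof.
elim: l => //= v l IH H; rewrite H ?mem_head //= IH // => x hx; apply: H.
by rewrite in_cons hx orbT.
Qed.

Theorem mainTheorem11 :
  exists C : R,
    forall (n : nat), 1 <= n ->
    forall (w : n.-tuple bool) (B : {set n.-tuple bool}),
      B != set0 -> w \notin B ->
      exists phi : formula,
        sentence phi /\
        (INR (nquant phi) <= log2R (INR n) + log2R (INR #|B|) + C)%R /\
        models w phi /\
        (forall w' : n.-tuple bool, w' \in B -> ~ models w' phi).
Proof.
exists 8%R => n n0 w B Bne wB.
set m := trunc_log 2 n.
have /andP [hm1 hm2] : expn 2 m <= n < expn 2 m.+1 by exact: (trunc_log_bounds (p:=2) isT n0).
set K := 2 * (m./2 + 2).
have hK : n.-1 <= Bnd K true.
  have h1 := Bnd_even (m./2 + 2).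
  have h2 : expn 2 m.+2 <= expn 4 (m./2 + 2).
    by rewrite (_ : 4 = expn 2 2) // -expnM leq_pexp2l //; lia.
  rewrite -/K in h1; rewrite (expnS 2 m) in hm2; rewrite (expnS 2 m.+1) (expnS 2 m) in h2; lia.
set s := enum B.
have sB : size s = #|B| by rewrite /s cardE.
set L := up_log 2 #|B|.
have hBL : #|B| <= expn 2 L := up_logP #|B| (isT : 1 < 2).
have hB1 : 0 < #|B| by rewrite card_gt0.
have hLn : 0 < L -> 1 < n.
  move=> hL; have hB2 : 1 < #|B| by move: hL; rewrite /L up_log_gt0 => /andP[].
  case: (ltnP 1 n) => // hn1.
  have sub : B \subset [set~ w].
    by apply/subsetP => x xB; rewrite in_setC1; apply/eqP => e; rewrite -e xB in wB.
  have := subset_leq_card sub; rewrite cardsC1 card_tuple card_bool.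
  have := leq_pexp2l (isT : 0 < 2) hn1; rewrite expn1; lia.
set f := fun j => Nps n K (dpos w (nth w s j)) (nth false w (dpos w (nth w s j))).
set phi := qpref (allq K L) (G K (mergeF K L f)).
exists phi.
have hf : forall j, allv (fun v => v <= K.+1) (f j).
  move=> j; rewrite /f /Nps /=; apply/andP; split.
    by apply: allv_M; rewrite //=; intros; lia.
  by case: (nth false w _) => /=.
have Hsem : forall (z : n.-tuple bool), models z phi <->
    forall j, j < 2 ^ L -> nth false z (dpos w (nth w s j)) = nth false w (dpos w (nth w s j)).
  move=> z; rewrite /models /phi (merge_sem z n0 _ hLn hf).
  split=> H j hj; have := H j hj; rewrite /f (G_sem z n0) //; exact: dpos_lt.
split.
  rewrite /sentence.
  have -> : phi = qpref (allq K L ++ (false, K.+1) :: chq K true) (mergeF K L f) by rewrite qpref_cat.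
  rewrite fv_qpref; apply: filter_nil => v hv.
  have hall : allv (fun x => 0 < x <= K.+1 + L) (mergeF K L f).
    apply: allv_mergeF => [j|j hj]; last by lia.
    rewrite /f /Nps /=; apply/andP; split.
      by apply: allv_M; rewrite //=; intros; lia.
    by case: (nth false w _) => /=; lia.
  have Pv : 0 < v <= K.+1 + L by have := fv_allv hv hall.
  rewrite map_cat mem_cat /= in_cons mem_allq mem_chq.
  have [h|h|h] := ltngtP v K.+1.
  - by apply/orP; right; apply/orP; right; lia.
  - by apply/orP; left; lia.
  - by apply/orP; right; apply/orP; left; apply/eqP.
split.
  rewrite /phi /G nquant_qpref /= nquant_qpref size_chq nquant_mergeF; last first.
    by move=> j; rewrite /f /Nps /= nquant_M; case: (nth false w _).
  have sL : size (allq K L) = L by elim: (L) => //= l ->.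
  rewrite sL addn0 plus_INR S_INR.
  have hKm : K <= m + 4 by rewrite /K; lia.
  have e1 : (INR K <= INR m + 4)%R.
    have gen : forall a b : nat, a <= b + 4 -> (INR a <= INR b + 4)%R.
      move=> a b h; have := le_INR _ _ (elimT leP h); rewrite plus_INR.
      have -> : INR 4 = 4%R by rewrite /=; lra.
      done.
    exact: gen.
  have e2 : (INR m <= log2R (INR n))%R by apply: log2_ge.
  have e3 : (INR L <= log2R (INR #|B|) + 1)%R.
    case: (posnP L) => hL.
      have := log2_ge (m := 0) hB1 hB1; rewrite hL /=; lra.
    have hB2 : 1 < #|B| by move: hL; rewrite /L up_log_gt0 => /andP[].
    have := up_log_gtn (isT : 1 < 2) hB2; rewrite -/L => hlt.
    have := log2_ge (m := L.-1) hB1 (ltnW hlt).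
    have -> : L = L.-1 + 1 by lia.
    rewrite plus_INR /=; replace (L.-1 + 1).-1 with L.-1 by lia; lra.
  match goal with |- (_ <= _ + log2R (INR ?c) + _)%R => have e4 : (INR L <= log2R (INR c) + 1)%R := e3 end; lra.
split.
  by apply/Hsem.
move=> w' hw' /Hsem H.
have wne : w' != w by apply/eqP => e; rewrite -e hw' in wB.
have hj : index w' s < 2 ^ L.
  rewrite -expn_pow; apply: (leq_trans _ hBL); rewrite -sB index_mem /s mem_enum //.
have := H _ hj; rewrite nth_index ?mem_enum // => e.
by have := dpos_diff wne; rewrite e eqxx.
Qed.
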